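(* Let $I$ be a set, $\lambda,\rho\colon I\to I$ bijections, and $E$ a non-trivial directed $\lambda,\rho$-weakly commutative generalized pseudo effect algebra. If the kite pseudo effect algebra $K^{\lambda,\rho}_I(E)$ satisfies RDP$_1$ and has a least non-trivial normal ideal, then $I$ is at most countable.
   Context: A generalized pseudo effect algebra (GPEA) is a structure $(E;+,0)$ with partial binary $+$ and constant $0$ such that for all $a,b,c$: (GP1) $a+b$ and $(a+b)+c$ exist iff $b+c$ and $a+(b+c)$ exist, and then they are equal; (GP2) if $a+b$ exists there are $d,e$ with $a+b=d+a=b+e$; (GP3) left and right cancellation; (GP4) $a+b=0$ implies $a=b=0$; (GP5) $a+0=0+a=a$. Non-trivial: $E\neq\{0\}$. Order: $a\le b$ iff $a+c=b$ for some $c$; for $a\le b$, $b\ominus_\ell a$ is the unique $d$ with $d+a=b$, $a\ominus_r b$ the unique $e$ with $a+e=b$. Directed: any two elements have a common upper bound. RDP$_1$: whenever $a_1+a_2=b_1+b_2$ there are $c_{11},c_{12},c_{21},c_{22}$ with $a_1=c_{11}+c_{12}$, $a_2=c_{21}+c_{22}$, $b_1=c_{11}+c_{21}$, $b_2=c_{12}+c_{22}$, such that $0\le x\le c_{12}$, $0\le y\le c_{21}$ imply $x+y=y+x$. An ideal is a non-empty subset closed under existing sums and downward closed; normal if $x+N=N+x$ for all $x$ ($x+N=\{x+y\colon y\in N,\ x+y\text{ defined}\}$, $N+x$ dually); non-trivial if $\neq\{0\}$; least non-trivial if contained in every non-trivial normal ideal. $\lambda,\rho$-weak commutativity: for all families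 $(f_j)$, $(a_i)$ in $E$ and all $i$: $f_{\rho^{-1}(i)}+a_i$ defined iff $a_i+f_{\lambda^{-1}(i)}$ defined, and $f_{\lambda^{-1}(i)}+a_i$ defined iff $a_i+f_{\rho^{-1}(i)}$ defined. Kite $K^{\lambda,\rho}_I(E)$ (a pseudo effect algebra): universe $E^I\uplus\overline E^I$, $\overline E=\{\bar a\colon a\in E\}$ a disjoint copy; $0=\langle 0\rangle$, $1=\langle\bar 0\rangle$; $\langle\bar a_i\rangle+\langle\bar b_i\rangle$ undefined; $\langle\bar a_i\colon i\in I\rangle+\langle f_j\colon j\in I\rangle=\langle\overline{f_{\rho^{-1}(i)}\ominus_r a_i}\rangle$ when $f_{\rho^{-1}(i)}\le a_i$ for all $i$; $\langle f_j\rangle+\langle\bar a_i\rangle=\langle\overline{a_i\ominus_\ell f_{\lambda^{-1}(i)}}\rangle$ when $f_{\lambda^{-1}(i)}\le a_i$ for all $i$; $\langle f_j\rangle+\langle g_j\rangle=\langle f_j+g_j\rangle$ when all coordinate sums are defined. *)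

(* Defs.v *)
From Stdlib Require Import Classical.

Set Implicit Arguments.

Section GPEA.
Variables (E : Type) (zero : E) (plus : E -> E -> option E).

Definition obind' {A B : Type} (o : option A) (f : A -> option B) : option B :=
  match o with Some a => f a | None => None end.

(* (GP1): a+b and (a+b)+c exist iff b+c and a+(b+c) exist, and then equal *)
Definition GP1 : Prop := forall a b c,
  obind' (plus a b) (fun ab => plus ab c) = obind' (plus b c) (fun bc => plus a bc).
Definition GP2 : Prop := forall a b s, plus a b = Some s ->
  exists d e, plus d a = Some s /\ plus b e = Some s.
Definition GP3 : Prop :=
  (forall a b c s, plus a b = Some s -> plus a c = Some s -> b = c) /\
  (forall a b c s, plus b a = Some s -> plus c a = Some s -> b = c).
Definition GP4 : Prop := forall a b, plus a b = Some zero -> a = zero /\ b = zero.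
Definition GP5 : Prop := forall a, plus a zero = Some a /\ plus zero a = Some a.

Definition is_GPEA : Prop := GP1 /\ GP2 /\ GP3 /\ GP4 /\ GP5.

Definition gle (a b : E) : Prop := exists c, plus a c = Some b.
Definition gdefined (a b : E) : Prop := exists s, plus a b = Some s.

Definition nontrivial : Prop := exists a, a <> zero.
Definition directed : Prop := forall a b, exists c, gle a c /\ gle b c.

(* lambda,rho-weak commutativity; lamI, rhoI are the inverses of lam, rho *)
Definition weakly_comm {I : Type} (lamI rhoI : I -> I) : Prop :=
  forall (f a : I -> E) (i : I),
    (gdefined (f (rhoI i)) (a i) <-> gdefined (a i) (f (lamI i))) /\
    (gdefined (f (lamI i)) (a i) <-> gdefined (a i) (f (rhoI i))).
End GPEA.

(* ---------- Partial algebras given by a sum relation  S x y z  (x+y=z) --- *)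

Section PartialAlg.
Variables (K : Type) (z0 : K) (S : K -> K -> K -> Prop).

Definition ple (x y : K) : Prop := exists c, S x c y.

Definition RDP1 : Prop := forall a1 a2 b1 b2 s, S a1 a2 s -> S b1 b2 s ->
  exists c11 c12 c21 c22,
    S c11 c12 a1 /\ S c21 c22 a2 /\ S c11 c21 b1 /\ S c12 c22 b2 /\
    (forall x y, ple z0 x -> ple x c12 -> ple z0 y -> ple y c21 ->
       exists t, S x y t /\ S y x t).

Definition ideal (N : K -> Prop) : Prop :=
  (exists x, N x) /\
  (forall x y s, N x -> N y -> S x y s -> N s) /\
  (forall x y, N y -> ple x y -> N x).

Definition normal (N : K -> Prop) : Prop :=
  forall x s, (exists y, N y /\ S x y s) <-> (exists y, N y /\ S y x s).

Definition nontrivial_set (N : K -> Prop) : Prop := exists x, N x /\ x <> z0.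

Definition least_nontrivial_normal_ideal (N : K -> Prop) : Prop :=
  ideal N /\ normal N /\ nontrivial_set N /\
  forall M, ideal M -> normal M -> nontrivial_set M -> forall x, N x -> M x.

Definition has_least_nontrivial_normal_ideal : Prop :=
  exists N, least_nontrivial_normal_ideal N.
End PartialAlg.

(* ---------- The kite K^{lam,rho}_I(E) ----------
   Universe: inl f  = <f_j> in E^I,  inr a = <bar a_i> in (bar E)^I.
   lamI, rhoI : inverses of lam, rho.  Sum given as a relation. *)

Definition kite_carrier (I E : Type) : Type := ((I -> E) + (I -> E))%type.

Definition kite_zero (I E : Type) (zero : E) : kite_carrier I E :=
  inl (fun _ => zero).

Definition kite_sum (I E : Type) (plus : E -> E -> option E) (lamI rhoI : I -> I)
  (x y z : kite_carrier I E) : Prop :=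
  match x, y, z with
  | inl f, inl g, inl h => forall i, plus (f i) (g i) = Some (h i)
  (* <bar a_i> + <f_j> = <bar (f_{rho^-1 i} -r a_i)>, i.e. f_{rho^-1 i} + c_i = a_i *)
  | inr a, inl f, inr c => forall i, plus (f (rhoI i)) (c i) = Some (a i)
  (* <f_j> + <bar a_i> = <bar (a_i -l f_{lam^-1 i})>, i.e. c_i + f_{lam^-1 i} = a_i *)
  | inl f, inr a, inr c => forall i, plus (c i) (f (lamI i)) = Some (a i)
  | _, _, _ => False
  end.

Definition at_most_countable (I : Type) : Prop :=
  exists g : I -> nat, forall x y, g x = g y -> x = y.

(* Main.v *)
Require Import Defs.
From Stdlib Require Import Classical FunctionalExtensionality IndefiniteDescription ClassicalEpsilon Arith Lia.

Fixpoint itr {I : Type} (f : I -> I) (n : nat) (x : I) : I :=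
  match n with 0 => x | S n => itr f n (f x) end.

Lemma itr_comm {I : Type} (f : I -> I) n x : f (itr f n x) = itr f n (f x).
Proof. revert x; induction n; intros x; simpl; auto. Qed.

Lemma itr_inv {I : Type} (f g : I -> I) (Hgf : forall x, g (f x) = x) n x :
  itr g n (itr f n x) = x.
Proof.
  induction n; simpl; auto.
  rewrite <- (itr_comm f n x). rewrite Hgf. exact IHn.
Qed.

Definition orb {I : Type} (s s' : I -> I) (j k : I) : Prop :=
  exists n, itr s n j = k \/ itr s' n j = k.

Lemma orb_step {I : Type} (s s' : I -> I) (H1 : forall x, s (s' x) = x) j k :
  orb s s' j k -> orb s s' j (s k).
Proof.
  intros [n [Hn|Hn]]; subst.
  - exists (S n); left; simpl; rewrite itr_comm; auto.
  - destruct n as [|m].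
    + exists 1; left; reflexivity.
    + exists m; right; simpl. rewrite <- itr_comm. rewrite H1. auto.
Qed.

Lemma orb_sym {I : Type} (s s' : I -> I) j k : orb s s' j k -> orb s' s j k.
Proof. intros [n [H|H]]; exists n; tauto. Qed.

Section Main.
Variables (I E : Type) (zero : E) (plus : E -> E -> option E).
Hypothesis HE : is_GPEA zero plus.

Lemma plus0r x s : plus x zero = Some s -> s = x.
Proof. pose proof HE as (_&_&_&_&H5). intros H. destruct (H5 x) as [A _].
  rewrite A in H; congruence. Qed.
Lemma plus0l x s : plus zero x = Some s -> s = x.
Proof. pose proof HE as (_&_&_&_&H5). intros H. destruct (H5 x) as [_ A].
  rewrite A in H; congruence. Qed.

Lemma zl c a e : plus zero c = Some a -> plus c e = Some a -> e = zero.
Proof.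
  intros H1 H2. apply plus0l in H1; subst.
  pose proof HE as (_&_&[C _]&_&H5). destruct (H5 c) as [A _].
  eapply C; eauto.
Qed.
Lemma zr c a d : plus c zero = Some a -> plus d c = Some a -> d = zero.
Proof.
  intros H1 H2. apply plus0r in H1; subst.
  pose proof HE as (_&_&[_ C]&_&H5). destruct (H5 c) as [_ A].
  eapply C; eauto.
Qed.
End Main.

Theorem lemma4p8 (I E : Type) (zero : E) (plus : E -> E -> option E)
  (lam lamI rho rhoI : I -> I)
  (Hlam1 : forall i, lamI (lam i) = i) (Hlam2 : forall i, lam (lamI i) = i)
  (Hrho1 : forall i, rhoI (rho i) = i) (Hrho2 : forall i, rho (rhoI i) = i)
  (HE : is_GPEA zero plus) (Hnt : nontrivial zero) (Hdir : directed plus)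
  (Hwc : weakly_comm plus lamI rhoI)
  (HRDP : RDP1 (kite_zero I zero) (kite_sum plus lamI rhoI))
  (Hleast : has_least_nontrivial_normal_ideal (kite_zero I zero)
              (kite_sum plus lamI rhoI)) :
  at_most_countable I.
Proof.
  set (s := fun i => lamI (rho i)). set (s' := fun i => rhoI (lam i)).
  assert (Hss' : forall x, s (s' x) = x).
  { intros x; unfold s, s'. rewrite Hrho2, Hlam1. auto. }
  assert (Hs's : forall x, s' (s x) = x).
  { intros x; unfold s, s'. rewrite Hlam2, Hrho1. auto. }
  assert (GP2 : forall a b t, plus a b = Some t -> exists d e, plus d a = Some t /\ plus b e = Some t)
    by (destruct HE as (_&H&_); exact H).
  assert (GP4 : forall a b, plus a b = Some zero -> a = zero /\ b = zero)
    by (destruct HE as (_&_&_&H&_); exact H).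
  set (NO := fun j (x : kite_carrier I E) => match x with
              | inl f => forall k, ~ orb s s' j k -> f k = zero
              | inr _ => False end).
  assert (Hout : forall j k, ~ orb s s' j k -> ~ orb s s' j (s k) /\ ~ orb s s' j (s' k)).
  { intros j k Hk; split; intro C; apply Hk.
    - rewrite <- (Hs's k). apply orb_sym. apply orb_step; auto. apply orb_sym; auto.
    - rewrite <- (Hss' k). apply orb_step; auto. }
  assert (Hideal : forall j, ideal (kite_sum plus lamI rhoI) (NO j)).
  { intros j; unfold NO; split; [|split].
    - exists (inl (fun _ => zero)); unfold NO; intros; reflexivity.
    - intros [f|a] [g|b] [h|c]; simpl; try tauto.
      intros Hf Hg Hs k Hk. specialize (Hs k). rewrite (Hf k Hk), (Hg k Hk) in Hs.
      exact (plus0r _ _ _ HE _ _ Hs).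
    - intros x [g|b] Hy [c Hc]; [|simpl in Hy; tauto].
      destruct x as [f|a]; destruct c as [c|c]; simpl in *; try tauto.
      intros k Hk. specialize (Hc k). rewrite (Hy k Hk) in Hc.
      apply GP4 in Hc; tauto. }
  assert (Hnormal : forall j, normal (kite_sum plus lamI rhoI) (NO j)).
  { intros j x t; unfold NO; split.
    - intros [[f|b] [Hy Hs]]; [|simpl in Hy; tauto].
      destruct x as [h|a]; destruct t as [u|c]; simpl in *; try tauto.
      + assert (Hc : forall i, exists d, plus d (h i) = Some (u i)).
        { intros i. destruct (GP2 _ _ _ (Hs i)) as (d&_&Hd&_). eauto. }
        apply functional_choice in Hc. destruct Hc as [d Hd].
        exists (inl d); split; simpl; auto.
        intros k Hk. specialize (Hs k). rewrite (Hy k Hk) in Hs.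
        eapply zr; eauto.
      + assert (Hc : forall i, exists e, plus (c i) e = Some (a i)).
        { intros i. destruct (GP2 _ _ _ (Hs i)) as (_&e&_&He). eauto. }
        apply functional_choice in Hc. destruct Hc as [e He].
        exists (inl (fun k => e (lam k))); split; simpl.
        * intros k Hk. destruct (Hout _ _ Hk) as [_ Hk'].
          specialize (Hs (lam k)). unfold s' in Hk'. rewrite (Hy _ Hk') in Hs.
          eapply zl; eauto.
        * intros i. rewrite Hlam2. auto.
    - intros [[f|b] [Hy Hs]]; [|simpl in Hy; tauto].
      destruct x as [h|a]; destruct t as [u|c]; simpl in *; try tauto.
      + assert (Hc : forall i, exists e, plus (h i) e = Some (u i)).
        { intros i. destruct (GP2 _ _ _ (Hs i)) as (_&e&_&He). eauto. }
        apply functional_choice in Hc. destruct Hc as [e He].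
        exists (inl e); split; simpl; auto.
        intros k Hk. specialize (Hs k). rewrite (Hy k Hk) in Hs.
        eapply zl; eauto.
      + assert (Hc : forall i, exists d, plus d (c i) = Some (a i)).
        { intros i. destruct (GP2 _ _ _ (Hs i)) as (d&_&Hd&_). eauto. }
        apply functional_choice in Hc. destruct Hc as [d Hd].
        exists (inl (fun k => d (rho k))); split; simpl.
        * intros k Hk. destruct (Hout _ _ Hk) as [Hk' _].
          specialize (Hs (rho k)). unfold s in Hk'. rewrite (Hy _ Hk') in Hs.
          eapply zr; eauto.
        * intros i. rewrite Hrho2. auto. }
  destruct Hnt as [a0 Ha0].
  assert (Hntj : forall j, nontrivial_set (kite_zero I zero) (NO j)).
  { intros j. exists (inl (fun k => if excluded_middle_informative (orb s s' j k) then a0 else zero)).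
    split.
    - simpl. intros k Hk. destruct excluded_middle_informative; tauto.
    - intro C. unfold kite_zero in C. injection C; intro C'.
      assert (X := f_equal (fun F => F j) C'). simpl in X.
      destruct excluded_middle_informative as [_|n]; [tauto|].
      apply n. exists 0; left; reflexivity. }
  destruct Hleast as [N (HN1 & HN2 & [x [Hx Hx0]] & HN4)].
  destruct (classic (exists j : I, True)) as [[j0 _]|Hemp].
  2:{ exists (fun _ => 0). intros y; exfalso; apply Hemp; eauto. }
  assert (HNO : forall j, NO j x) by (intros j; apply HN4; auto).
  pose proof (HNO j0) as H0. destruct x as [f|a]; [|simpl in H0; tauto].
  assert (Hi : exists i, f i <> zero).
  { apply NNPP; intro C. apply Hx0. unfold kite_zero. f_equal.
    apply functional_extensionality; intro i. apply NNPP; intro D. apply C; eauto. }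
  destruct Hi as [i Hi].
  assert (Hall : forall j, orb s s' j i).
  { intros j. apply NNPP; intro C. apply Hi. exact (HNO j i C). }
  set (F := fun m => if Nat.even m then itr s' (Nat.div2 m) i else itr s (Nat.div2 m) i).
  assert (Hg : forall j, exists m, j = F m).
  { intros j. destruct (Hall j) as [n [Hn|Hn]].
    - exists (2 * n). unfold F. rewrite Nat.div2_double, Nat.even_mul. simpl. rewrite <- Hn. symmetry; apply itr_inv; auto.
    - exists (S (2 * n)). unfold F. rewrite Nat.div2_succ_double, Nat.even_succ, Nat.odd_mul. simpl. rewrite <- Hn. symmetry; apply itr_inv; auto. }
  apply functional_choice in Hg. destruct Hg as [g Hg].
  exists g. intros y z Eyz. rewrite (Hg y), (Hg z), Eyz. reflexivity.
Qed.
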